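(* Let $P$ be a (possibly infinite) positive causal logic program with $n$ rules ($n\le\omega$, with $n=\omega$ if $P$ is infinite). Then (i) the least fixpoint $\mathrm{lfp}(T_P)$ of the direct consequences operator exists and is the $\le$-least causal model of $P$, and (ii) $\mathrm{lfp}(T_P)=T_P\!\uparrow\!\omega=T_P\!\uparrow\! n$.
   Context: Causal graphs over a label set $Lb$: graphs $\langle V,E\rangle$, $V\subseteq Lb$, $E\subseteq V\times V$, reflexively and transitively closed; $G\le G'$ iff $G\supseteq G'$ (as vertex and edge sets). $G*G'=(G\cup G')^*$, $G\cdot G'=(G\odot G')^*$ where $G\odot G'$ has vertex set $V\cup V'$ and edge set $E\cup E'\cup\{(x,y)\mid x\in V,y\in V'\}$, and $^*$ is reflexive–transitive closure. Causal values are down-sets (ideals) of $\langle$causal graphs$,\le\rangle$, ordered by $\subseteq$; $U*U'=U\cap U'$, $U+U'=U\cup U'$, $U\cdot U'={\downarrow}\{G\cdot G'\mid G\in U,G'\in U'\}$; arbitrary sums are unions and arbitrary products intersections; $0=\emptyset$, $1$ = the set of all causal graphs; a label $l$ stands for the value ${\downarrow}G_l$ where $G_l$ has the single vertex $l$ and single edge $(l,l)$. A causal logic program over signature $\langle At,Lb\rangle$ is a set of rules $t: H\leftarrow B_1,\dots,B_n$ with $t\in Lb\cup\{1\}$, $H\in At$, $B_i$ literals ($p$ or $\mathit{not}\ p$); it is positive if no default negation occurs. A causal interpretation is a map $I:At\to$ causal values; $I\le J$ iff $I(p)\le J(p)$ for all $p$. $I$ is a causal model of positive $P$ iff for every rule,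 $(I(B_1)*\dots*I(B_n))\cdot t\le I(H)$ (empty product $=1$). $T_P(I)(p)=\sum\{(I(B_1)*\dots*I(B_n))\cdot t\mid (t:p\leftarrow B_1,\dots,B_n)\in P\}$. $T_P\!\uparrow\!0$ maps every atom to $0$, $T_P\!\uparrow\!(k+1)=T_P(T_P\!\uparrow\!k)$, and $T_P\!\uparrow\!\omega(p)=\sum_{k<\omega}T_P\!\uparrow\!k(p)$. *)

(* Defs.v *)
From Stdlib Require Import List.
Set Implicit Arguments.

Section Causal.
Variables (Lb At : Type).

Record cgraph := CGraph {
  gV : Lb -> Prop;
  gE : Lb -> Lb -> Prop;
  gE_dom : forall x y, gE x y -> gV x /\ gV y;
  gE_refl : forall x, gV x -> gE x x;
  gE_trans : forall x y z, gE x y -> gE y z -> gE x z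
}.

(** G <= G' iff G ⊇ G' (as vertex and edge sets). *)
Definition gle (G G' : cgraph) : Prop :=
  (forall x, gV G' x -> gV G x) /\ (forall x y, gE G' x y -> gE G x y).

Inductive rtc (V : Lb -> Prop) (E : Lb -> Lb -> Prop) : Lb -> Lb -> Prop :=
| rtc_refl : forall x, V x -> rtc V E x x
| rtc_step : forall x y z, E x y -> rtc V E y z -> rtc V E x z.

Lemma rtc_dom (V : Lb -> Prop) (E : Lb -> Lb -> Prop)
  (H : forall x y, E x y -> V x /\ V y) :
  forall x y, rtc V E x y -> V x /\ V y.
Proof.
  induction 1 as [x Hx|x y z Hxy _ IH]; [tauto|].
  destruct (H _ _ Hxy); tauto.
Qed.

Lemma rtc_trans (V : Lb -> Prop) (E : Lb -> Lb -> Prop) :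
  forall x y z, rtc V E x y -> rtc V E y z -> rtc V E x z.
Proof.
  induction 1 as [x Hx|x y w Hxy _ IH]; intros; [assumption|].
  eapply rtc_step; eauto.
Qed.

Definition gclose (V : Lb -> Prop) (E : Lb -> Lb -> Prop)
  (H : forall x y, E x y -> V x /\ V y) : cgraph :=
  @CGraph V (rtc V E) (@rtc_dom V E H) (@rtc_refl V E) (@rtc_trans V E).

Definition odot_E (G G' : cgraph) (x y : Lb) : Prop :=
  gE G x y \/ gE G' x y \/ (gV G x /\ gV G' y).

Definition odot_V (G G' : cgraph) (x : Lb) : Prop := gV G x \/ gV G' x.

Lemma odot_dom (G G' : cgraph) :
  forall x y, odot_E G G' x y -> odot_V G G' x /\ odot_V G G' y.
Proof.
  unfold odot_E, odot_V; intros x y [H|[H|[H1 H2]]].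
  - destruct (gE_dom G _ _ H); tauto.
  - destruct (gE_dom G' _ _ H); tauto.
  - tauto.
Qed.

Definition gprod (G G' : cgraph) : cgraph :=
  @gclose (odot_V G G') (odot_E G G') (@odot_dom G G').

Lemma single_dom (l : Lb) :
  forall x y, (x = l /\ y = l) -> x = l /\ y = l.
Proof. tauto. Qed.

Definition glab (l : Lb) : cgraph.
Proof.
  refine (@CGraph (fun x => x = l) (fun x y => x = l /\ y = l) _ _ _).
  - tauto.
  - tauto.
  - intros x y z [H1 _] [_ H2]; tauto.
Defined.

(** Causal values: down-sets (ideals) of <causal graphs, <=>, ordered by ⊆. *)
Definition value := cgraph -> Prop.

Definition ideal (U : value) : Prop :=
  forall G G', gle G' G -> U G -> U G'.

Definition vle (U U' : value) : Prop := forall G, U G -> U' G.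

Definition vzero : value := fun _ => False.
Definition vone : value := fun _ => True.
Definition vmeet (U U' : value) : value := fun G => U G /\ U' G.
Definition vjoin (U U' : value) : value := fun G => U G \/ U' G.
Definition vprod (U U' : value) : value :=
  fun H => exists G G', U G /\ U' G' /\ gle H (gprod G G').
Definition vlab (l : Lb) : value := fun H => gle H (glab l).

(** Rule labels: t ∈ Lb ∪ {1}; None stands for 1. *)
Definition vterm (t : option Lb) : value :=
  match t with None => vone | Some l => vlab l end.

(** Positive causal rules  t : H <- B_1, ..., B_n  (bodies contain only atoms,
    i.e. no default negation). *)
Record rule := Rule { rlab : option Lb; rhead : At; rbody : list At }.

Definition program := rule -> Prop.

Definition interp := At -> value.
Definition is_interp (I : interp) : Prop := forall p, ideal (I p).
Definition ile (I J : interp) : Prop := forall p, vle (I p) (J p).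

Definition body_val (I : interp) (B : list At) : value :=
  fold_right (fun p acc => vmeet (I p) acc) vone B.

Definition rule_val (I : interp) (r : rule) : value :=
  vprod (body_val I (rbody r)) (vterm (rlab r)).

Definition is_model (P : program) (I : interp) : Prop :=
  forall r, P r -> vle (rule_val I r) (I (rhead r)).

Definition TP (P : program) (I : interp) : interp :=
  fun p G => exists r, P r /\ rhead r = p /\ rule_val I r G.

Fixpoint TP_up (P : program) (k : nat) : interp :=
  match k with
  | 0 => fun _ => vzero
  | S k => TP P (TP_up P k)
  end.

Definition TP_omega (P : program) : interp :=
  fun p G => exists k, TP_up P k p G.

Definition is_lfp (P : program) (I : interp) : Prop :=
  is_interp I /\ TP P I = I /\
  forall J, is_interp J -> TP P J = J -> ile I J.

Definition is_least_model (P : program) (I : interp) : Prop :=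
  is_interp I /\ is_model P I /\
  forall J, is_interp J -> is_model P J -> ile I J.

Definition countable_program (P : program) : Prop :=
  exists f : nat -> rule, forall r, P r -> exists k, f k = r.

Definition has_n_rules (P : program) (n : nat) : Prop :=
  exists l : list rule, NoDup l /\ (forall r, P r <-> In r l) /\ length l = n.

End Causal.

(* Main.v *)
Require Import Defs.
From Stdlib Require Import List Lia Classical FunctionalExtensionality PropExtensionality.

Lemma gle_trans {Lb} (A B C : cgraph Lb) : gle A B -> gle B C -> gle A C.
Proof. unfold gle; firstorder. Qed.

Lemma gprod_le_l {Lb} (G G' : cgraph Lb) : gle (gprod G G') G.
Proof.
  split; intros.
  - simpl. left. exact H.
  - simpl. eapply rtc_step. left. exact H.
    apply rtc_refl. left. destruct (gE_dom _ _ _ H). assumption.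
Qed.

Lemma body_val_cons {Lb At} (I : interp Lb At) a B G :
  body_val I (a::B) G <-> I a G /\ body_val I B G.
Proof. unfold body_val; simpl; unfold vmeet; tauto. Qed.

Lemma body_val_mono {Lb At} (I J : interp Lb At) B G :
  (forall p G, I p G -> J p G) -> body_val I B G -> body_val J B G.
Proof.
  intros HIJ. induction B; intros HB.
  - exact HB.
  - apply body_val_cons in HB. apply body_val_cons. destruct HB; split; auto.
Qed.

Lemma rule_val_mono {Lb At} (I J : interp Lb At) r G :
  (forall p G, I p G -> J p G) -> rule_val I r G -> rule_val J r G.
Proof.
  intros HIJ [G1 [G2 [H1 [H2 H3]]]]. exists G1, G2. split; [|split; auto].
  eapply body_val_mono; eauto.
Qed.

Lemma rule_val_ideal {Lb At} (I : interp Lb At) r : ideal (rule_val I r).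
Proof.
  intros G G' Hle [G1 [G2 [H1 [H2 H3]]]]. exists G1, G2.
  split; [auto|split; [auto|eapply gle_trans; eauto]].
Qed.

Lemma rule_val_body {Lb At} (I : interp Lb At) r H :
  rule_val I r H -> exists G, gle H G /\ body_val I (rbody r) G /\
     (forall J, body_val J (rbody r) G -> rule_val J r H).
Proof.
  intros [G1 [G2 [H1 [H2 H3]]]]. exists G1. split; [|split; auto].
  - eapply gle_trans; [exact H3|apply gprod_le_l].
  - intros J HJ. exists G1, G2; auto.
Qed.

Lemma TP_mono {Lb At} (P : program Lb At) (I J : interp Lb At) :
  (forall p G, I p G -> J p G) -> forall p G, TP P I p G -> TP P J p G.
Proof.
  intros HIJ p G [r [Pr [Hh Hr]]]. exists r. repeat split; auto.
  eapply rule_val_mono; eauto.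
Qed.

Lemma TP_ideal {Lb At} (P : program Lb At) I p : ideal (TP P I p).
Proof.
  intros G G' Hle [r [Pr [Hh Hr]]]. exists r. repeat split; auto.
  eapply rule_val_ideal; eauto.
Qed.

Lemma TP_up_ideal {Lb At} (P : program Lb At) k : is_interp (TP_up P k).
Proof.
  destruct k; intros p.
  - intros G G' _ [].
  - apply TP_ideal.
Qed.

Lemma TP_up_S {Lb At} (P : program Lb At) k :
  forall p G, TP_up P k p G -> TP_up P (S k) p G.
Proof.
  induction k; intros p G H.
  - destruct H.
  - simpl in *. eapply TP_mono; eauto.
Qed.

Lemma chain_le {Lb At} (F : nat -> interp Lb At)
  (Hm : forall k p G, F k p G -> F (S k) p G) :
  forall k k', k <= k' -> forall p G, F k p G -> F k' p G.
Proof. induction 1; auto. Qed.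

Lemma body_val_chain {Lb At} (F : nat -> interp Lb At)
  (Hm : forall k p G, F k p G -> F (S k) p G) B G :
  body_val (fun p G => exists k, F k p G) B G -> exists k, body_val (F k) B G.
Proof.
  induction B; intros HB.
  - exists 0. exact HB.
  - apply body_val_cons in HB. destruct HB as [[k1 H1] H2].
    destruct (IHB H2) as [k2 Hk2]. exists (max k1 k2).
    apply body_val_cons. split.
    + eapply chain_le; [exact Hm| |exact H1]. lia.
    + eapply body_val_mono; [|exact Hk2]. apply chain_le; [exact Hm|lia].
Qed.

Lemma body_split {Lb At} (I Good : interp Lb At) (E : Prop) B G :
  (forall b, I b G -> Good b G \/ E) -> body_val I B G -> body_val Good B G \/ E.
Proof.
  intros Hb. induction B; intros HB.
  - left. exact HB.
  - apply body_val_cons in HB. destruct HB as [H1 H2].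
    destruct (Hb _ H1) as [G1|E1]; [|right; auto].
    destruct (IHB H2) as [G2|E2]; [|right; auto].
    left. apply body_val_cons; auto.
Qed.

Fixpoint W {Lb At} (P : program Lb At) (A : list (rule Lb At)) (m : nat)
  : interp Lb At :=
  match m with
  | 0 => fun _ _ => False
  | S m => fun p G => exists r, P r /\ ~ In r A /\ rhead r = p /\
                                rule_val (W P (r::A) m) r G
  end.

Lemma W_ideal {Lb At} (P : program Lb At) A m p : ideal (W P A m p).
Proof.
  destruct m; intros G G' Hle HG.
  - destruct HG.
  - destruct HG as [r [Pr [Hn [Hh Hr]]]]. exists r. repeat split; auto.
    eapply rule_val_ideal; eauto.
Qed.

Lemma W_S {Lb At} (P : program Lb At) m :
  forall A p G, W P A m p G -> W P A (S m) p G.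
Proof.
  induction m; intros A p G H.
  - destruct H.
  - destruct H as [r [Pr [Hn [Hh Hr]]]]. exists r. repeat split; auto.
    eapply rule_val_mono; [|exact Hr]. intros; apply IHm; auto.
Qed.

Lemma W_TP {Lb At} (P : program Lb At) m :
  forall A p G, W P A m p G -> TP_up P m p G.
Proof.
  induction m; intros A p G H.
  - destruct H.
  - destruct H as [r [Pr [Hn [Hh Hr]]]]. exists r. repeat split; auto.
    eapply rule_val_mono; [|exact Hr]. intros; eapply IHm; eauto.
Qed.

Lemma W_bound {Lb At} (P : program Lb At) (l : list (rule Lb At)) n
  (Hl : NoDup l) (HP : forall r, P r <-> In r l) (Hn : length l = n) :
  forall m A p G, NoDup A -> (forall r, In r A -> P r) ->
    W P A m p G -> W P A (n - length A) p G.
Proof.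
  induction m; intros A p G ND HA H.
  - destruct H.
  - destruct H as [r [Pr [Hnin [Hh Hr]]]].
    assert (ND' : NoDup (r::A)) by (constructor; auto).
    assert (HA' : forall r', In r' (r::A) -> P r').
    { intros r' [<-|Hr']; auto. }
    assert (Hlen : length (r::A) <= length l).
    { apply NoDup_incl_length; auto. intros x Hx. apply HP; auto. }
    simpl in Hlen.
    replace (n - length A) with (S (n - length (r::A))) by (simpl; lia).
    exists r. repeat split; auto.
    eapply rule_val_mono; [|exact Hr]. intros; apply IHm; auto.
Qed.

Definition Esc {Lb At} (P : program Lb At) (C : list (rule Lb At)) G : Prop :=
  exists A1 r A2, C = A1 ++ r :: A2 /\ exists m, W P A2 m (rhead r) G.

Lemma Esc_down {Lb At} (P : program Lb At) C G H :
  gle H G -> Esc P C G -> Esc P C H.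
Proof.
  intros Hle [A1 [r [A2 [E [m Hm]]]]]. exists A1, r, A2. split; auto.
  exists m. eapply W_ideal; eauto.
Qed.

Lemma children {Lb At} (P : program Lb At) k (C : list (rule Lb At)) (r : rule Lb At) (G : cgraph Lb) :
  (forall p G, TP_up P k p G -> (exists m, W P C m p G) \/ Esc P C G) ->
  body_val (TP_up P k) (rbody r) G ->
  (exists m, body_val (W P C m) (rbody r) G) \/ Esc P C G.
Proof.
  intros IH HB.
  destruct (body_split (TP_up P k) (fun p G => exists m, W P C m p G) (Esc P C G)
              (rbody r) G (fun b Hb => IH b G Hb) HB) as [Hg|He]; [|right; auto].
  left. apply body_val_chain; auto. intros; apply W_S; auto.
Qed.

Lemma main {Lb At} (P : program Lb At) k :
  forall A p H, NoDup A -> TP_up P k p H ->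
    (exists m, W P A m p H) \/ Esc P A H.
Proof.
  induction k; intros A p H ND Hk.
  - destruct Hk.
  - destruct Hk as [r [Pr [Hh Hrv]]].
    destruct (rule_val_body _ _ _ Hrv) as [G [HHG [HB Hback]]].
    destruct (classic (In r A)) as [Hin|Hnin].
    + destruct (in_split _ _ Hin) as [A1 [A2 EA]].
      assert (ND2 : NoDup (r::A2)) by (subst A; eapply NoDup_app_remove_l; eauto).
      assert (Hn2 : ~ In r A2) by (inversion ND2; auto).
      destruct (children P k (r::A2) r G (fun p G Hp => IHk (r::A2) p G ND2 Hp) HB)
        as [[m Hm]|He].
      * right. exists A1, r, A2. split; auto. exists (S m).
        exists r. repeat split; auto.
      * apply (Esc_down _ _ _ _ HHG) in He.
        destruct He as [[|x B1] [r' [B2 [E [m Hm]]]]].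
        -- simpl in E. inversion E; subst. right. exists A1, r', B2. split; auto.
           exists m; auto.
        -- simpl in E. inversion E; subst. right.
           exists (A1 ++ x :: B1), r', B2. split.
           ++ rewrite <- app_assoc. reflexivity.
           ++ exists m; auto.
    + assert (ND2 : NoDup (r::A)) by (constructor; auto).
      destruct (children P k (r::A) r G (fun p G Hp => IHk (r::A) p G ND2 Hp) HB)
        as [[m Hm]|He].
      * left. exists (S m). exists r. repeat split; auto.
      * apply (Esc_down _ _ _ _ HHG) in He.
        destruct He as [[|x B1] [r' [B2 [E [m Hm]]]]].
        -- simpl in E. inversion E; subst. left. exists m; auto.
        -- simpl in E. inversion E; subst. right.
           exists B1, r', B2. split; auto. exists m; auto.
Qed.

Lemma model_TP_sub {Lb At} (P : program Lb At) J :
  is_model P J -> forall p G, TP P J p G -> J p G.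
Proof.
  intros HM p G [r [Pr [Hh Hr]]]. subst p. exact (HM r Pr G Hr).
Qed.

Lemma TP_up_le_model {Lb At} (P : program Lb At) J :
  is_model P J -> forall k p G, TP_up P k p G -> J p G.
Proof.
  intros HM k. induction k; intros p G H.
  - destruct H.
  - apply (model_TP_sub P J HM). eapply TP_mono; eauto.
Qed.

Lemma omega_fix {Lb At} (P : program Lb At) : TP P (TP_omega P) = TP_omega P.
Proof.
  apply functional_extensionality; intro p.
  apply functional_extensionality; intro G.
  apply propositional_extensionality. split.
  - intros [r [Pr [Hh Hr]]].
    destruct (rule_val_body _ _ _ Hr) as [G1 [HG1 [HB Hback]]].
    destruct (body_val_chain (TP_up P) (TP_up_S P) (rbody r) G1 HB) as [k Hk].
    exists (S k). exists r. repeat split; auto.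
  - intros [k Hk]. destruct k; [destruct Hk|].
    eapply TP_mono; [|exact Hk]. intros; exists k; auto.
Qed.

Lemma fix_model {Lb At} (P : program Lb At) J : TP P J = J -> is_model P J.
Proof.
  intros HF r Pr G HG. rewrite <- HF. exists r; auto.
Qed.

Lemma omega_interp {Lb At} (P : program Lb At) : is_interp (TP_omega P).
Proof.
  intros p G G' Hle [k Hk]. exists k. eapply TP_up_ideal; eauto.
Qed.

Lemma omega_lfp {Lb At} (P : program Lb At) : is_lfp P (TP_omega P).
Proof.
  split; [apply omega_interp|split; [apply omega_fix|]].
  intros J _ HF p G [k Hk]. eapply TP_up_le_model; eauto. apply fix_model; auto.
Qed.

Lemma omega_least {Lb At} (P : program Lb At) : is_least_model P (TP_omega P).
Proof.
  split; [apply omega_interp|split].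
  - apply fix_model, omega_fix.
  - intros J _ HM p G [k Hk]. eapply TP_up_le_model; eauto.
Qed.

Lemma interp_ext {Lb At} (I J : interp Lb At) : ile I J -> ile J I -> I = J.
Proof.
  intros H1 H2. apply functional_extensionality; intro p.
  apply functional_extensionality; intro G.
  apply propositional_extensionality. split; [apply H1|apply H2].
Qed.

Theorem theorem2 (Lb At : Type) (P : program Lb At)
  (Hcount : countable_program P) :
  (exists I, is_lfp P I /\ is_least_model P I) /\
  (forall I, is_lfp P I ->
     TP_omega P = I /\
     (forall n : nat, has_n_rules P n -> TP_up P n = I)).
Proof.
  split.
  - exists (TP_omega P). split; [apply omega_lfp|apply omega_least].
  - intros I [HI [HF HL]].
    assert (Eo : TP_omega P = I).
    { destruct (omega_lfp P) as [HI' [HF' HL']].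
      apply interp_ext; [apply HL'|apply HL]; auto. }
    split; [exact Eo|].
    intros n [l [Hl [HP Hn]]]. rewrite <- Eo.
    apply interp_ext.
    + intros p G Hk. exists n; auto.
    + intros p G [k Hk].
      destruct (main P k nil p G (NoDup_nil _) Hk) as [[m Hm]|He].
      * pose proof (W_bound P l n Hl HP Hn m nil p G (NoDup_nil _)
                     (fun r H => match H with end) Hm) as Hb.
        simpl in Hb. rewrite PeanoNat.Nat.sub_0_r in Hb.
        eapply W_TP; eauto.
      * destruct He as [A1 [r [A2 [E _]]]]. destruct A1; discriminate.
Qed.
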